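(* Let $A$ be a countably infinite set and $f:A\to A$ a bijection. Then there exist an integer $n\ge1$ and a binary operation $*$ on $A$ such that $(A,* )$ is a group isomorphic to $(\mathbb{Z}^n,+)$ and $f$ is an automorphism of $(A,* )$ if and only if all of the following hold: (1) $f$ has at least one cycle of length $1$ (a fixed point); fix one such fixed point $a_0$ (playing the role of the zero cycle), and call the cycles of $f$ other than $\{a_0\}$ non-zero cycles; (2) the set of distinct lengths of cycles of $f$ is finite; (3) if $f$ has a non-zero cycle of length $k$, then $f$ has infinitely many cycles of length $k$; (4) if $f$ has a chain, then $f$ has infinitely many chains; (5) if $f$ has non-zero cycles of lengths $\alpha$ and $\beta$, then $f$ has a cycle of length $\mathrm{lcm}(\alpha,\beta)$.
   Context: For a bijection $f$ of a set $A$, a cycle is a finite sequence $a_1,\dots,a_m$ of distinct elements with $f(a_j)=a_{j+1}$ for $j<m$ and $f(a_m)=a_1$ (of length $m$); a chain is a two-sided infinite sequence $\dots,a_{-1},a_0,a_1,\dots$ of distinct elements with $f(a_j)=a_{j+1}$ for all $j$. Every element of $A$ lies in exactly one cycle or chain. In the paper, ''non-zero cycle'' refers to cycles other than the one that would correspond to the identity element; here this is expressed via the chosen fixed point $a_0$. *)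

(* Defs.v *)
From mathcomp Require Import all_boot all_order all_algebra.
From mathcomp Require Import boolp classical_sets cardinality.
Set Implicit Arguments. Unset Strict Implicit. Unset Printing Implicit Defensive.
Import GRing.Theory.
Local Open Scope classical_set_scope.

(* The f-orbit of x (for a bijection f): all y reachable from x or from which x
   is reachable by forward iteration. Every cycle / chain of f is such an orbit. *)
Definition orbit_of (A : Type) (f : A -> A) (x : A) : set A :=
  [set y | exists n : nat, y = iter n f x \/ x = iter n f y].

Definition period (A : Type) (f : A -> A) (x : A) (m : nat) : Prop :=
  (0 < m)%N /\ iter m f x = x /\ (forall k : nat, (0 < k < m)%N -> iter k f x <> x).

Definition is_cycle (A : Type) (f : A -> A) (C : set A) (m : nat) : Prop :=
  exists x, C = orbit_of f x /\ period f x m.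

Definition is_chain (A : Type) (f : A -> A) (C : set A) : Prop :=
  exists x, C = orbit_of f x /\ (forall m : nat, (0 < m)%N -> iter m f x <> x).

Definition countably_infinite (A : Type) : Prop :=
  exists g : nat -> A, bijective g.

Definition group_iso_Zn (A : Type) (op : A -> A -> A) (n : nat) : Prop :=
  (forall x y z, op x (op y z) = op (op x y) z) /\
  (exists e : A, (forall x, op e x = x /\ op x e = x) /\
                 (forall x, exists y, op x y = e /\ op y x = e)) /\
  (exists phi : A -> 'rV[int]_n, bijective phi /\
                 forall x y, phi (op x y) = (phi x + phi y)%R).

Definition is_automorphism (A : Type) (op : A -> A -> A) (f : A -> A) : Prop :=
  bijective f /\ forall x y, f (op x y) = op (f x) (f y).

(* Main.v *)
Require Import Defs.
From mathcomp Require Import all_boot all_order all_algebra.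
From mathcomp Require Import boolp classical_sets cardinality.
From HB Require Import structures.
From mathcomp Require Import all_field.
From mathcomp Require Import functions.
From mathcomp Require Import zify ring.
From Stdlib Require Import ClassicalEpsilon.
Set Implicit Arguments. Unset Strict Implicit. Unset Printing Implicit Defensive.
Import GRing.Theory Num.Theory.

HB.instance Definition _ := isPointed.Build int 0%R.

Module MP1.
Local Open Scope classical_set_scope.

Section IterFacts.
Variables (T : Type) (f : T -> T).

Definition nonper (x : T) := forall m, (0 < m)%N -> iter m f x <> x.

Lemma iter_mul_fix k x : iter k f x = x -> forall q, iter (q * k) f x = x.
Proof. by move=> hk; elim=> [|q IH] //; rewrite mulSn iterD IH hk. Qed.

Lemma iter_comm k x : iter k f (f x) = f (iter k f x).
Proof. by rewrite -iterSr iterS. Qed.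

Lemma period_dvd x p k : period f x p -> (iter k f x = x <-> (p %| k)%N).
Proof.
move=> [p0 [hp hmin]]; split; last first.
  by move=> /dvdnP [q ->]; apply: iter_mul_fix.
move=> hk; rewrite /dvdn; apply/eqP; case: (posnP (k %% p)) => // hne; exfalso.
have hlt : (0 < k %% p < p)%N by rewrite hne ltn_pmod.
apply: (hmin _ hlt).
by rewrite -{2}hk {2}(divn_eq k p) addnC iterD iter_mul_fix.
Qed.

Lemma period_unique x p q : period f x p -> period f x q -> p = q.
Proof.
move=> hp hq; apply/eqP; rewrite eqn_dvd.
apply/andP; split; [apply/(period_dvd _ hp) | apply/(period_dvd _ hq)].
  exact: (proj1 (proj2 hq)).
exact: (proj1 (proj2 hp)).
Qed.

Lemma period_exists x k : (0 < k)%N -> iter k f x = x -> exists p, period f x p.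
Proof.
elim/ltn_ind: k => k IH k0 hk.
case: (pselect (exists j, (0 < j < k)%N /\ iter j f x = x)) => [[j [/andP [j0 jk] hj]]|hn].
  exact: (IH j jk j0 hj).
exists k; split => //; split => // j hj hjx; apply: hn; exists j; split => //.
Qed.

Lemma per_or_nonper x : (exists p, period f x p) \/ nonper x.
Proof.
case: (pselect (exists m, (0 < m)%N /\ iter m f x = x)) => [[m [m0 hm]]|hn].
  by left; apply: (period_exists m0 hm).
by right => m m0 hm; apply: hn; exists m.
Qed.

Lemma period_nonper x p : period f x p -> nonper x -> False.
Proof. by move=> [p0 [hp _]] hn; exact: (hn p p0 hp). Qed.

End IterFacts.

Section Zit.
Variables (T : Type) (f g : T -> T) (fK : cancel f g) (gK : cancel g f).

Definition zit (z : int) (x : T) : T :=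
  match z with Posz n => iter n f x | Negz n => iter n.+1 g x end.

Lemma zit_pos (n : nat) x : zit n x = iter n f x. Proof. by []. Qed.

Lemma zit_neg (n : nat) x : zit (- n%:Z)%R x = iter n g x.
Proof. by case: n => [|m] //; rewrite -NegzE. Qed.

Lemma zit0 x : zit 0 x = x. Proof. by []. Qed.

Lemma iter_g_f n x : iter n g (iter n f x) = x.
Proof. by elim: n x => [|n IH] x //; rewrite iterSr iterS fK IH. Qed.

Lemma iter_f_g n x : iter n f (iter n g x) = x.
Proof. by elim: n x => [|n IH] x //; rewrite iterSr iterS gK IH. Qed.

Lemma g_comm n x : iter n g (f x) = f (iter n g x).
Proof.
by elim: n x => [|n IH] x //; rewrite iterS IH fK iterS gK.
Qed.

Lemma zit_f z x : zit z (f x) = f (zit z x).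
Proof. by case: z => n; rewrite /zit; [exact: iter_comm | exact: g_comm]. Qed.

Lemma zitS z x : zit (z + 1)%R x = f (zit z x).
Proof.
case: z => n.
  by rewrite addrC -intS.
have e : (Negz n + 1 = - n%:Z)%R by rewrite NegzE intS opprD addrAC subrr add0r.
by rewrite e zit_neg [in RHS]/zit iterS gK.
Qed.

Lemma zitP z x : zit (z - 1)%R x = g (zit z x).
Proof. by rewrite -{2}(subrK 1%R z) zitS fK. Qed.

Lemma zit_addn z (n : nat) x : zit (z + n%:Z)%R x = iter n f (zit z x).
Proof.
elim: n => [|n IH]; first by rewrite addr0.
by rewrite intS addrA addrAC zitS IH.
Qed.

Lemma zit_subn z (n : nat) x : zit (z - n%:Z)%R x = iter n g (zit z x).
Proof.
elim: n => [|n IH]; first by rewrite subr0.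
by rewrite intS opprD addrA addrAC zitP IH.
Qed.

Lemma zit_comm z x : forall (n : nat), zit z (iter n f x) = iter n f (zit z x).
Proof. by elim=> [|n IH] //; rewrite !iterS zit_f IH. Qed.

Lemma zit_g z x : zit z (g x) = g (zit z x).
Proof. by rewrite -{2}(gK x) zit_f fK. Qed.

Lemma zit_commg z x : forall (n : nat), zit z (iter n g x) = iter n g (zit z x).
Proof. by elim=> [|n IH] //; rewrite !iterS zit_g IH. Qed.

Lemma zitD a b x : zit (a + b)%R x = zit a (zit b x).
Proof.
case: b => n.
  by rewrite zit_addn zit_pos zit_comm.
by rewrite NegzE zit_subn zit_neg zit_commg.
Qed.

Lemma zitN z x y : zit z x = y -> zit (- z)%R y = x.
Proof. by move=> <-; rewrite -zitD addNr. Qed.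

Lemma zit_inj z : injective (zit z).
Proof. by move=> x y hxy; rewrite -(zitN (erefl (zit z x))) hxy (zitN (erefl (zit z y))). Qed.

Lemma zit_iter z n x : zit z (iter n f x) = iter n f (zit z x).
Proof. exact: zit_comm. Qed.

Definition orb (x y : T) := exists z, y = zit z x.

Lemma orb_refl x : orb x x. Proof. by exists 0%R. Qed.
Lemma orb_sym x y : orb x y -> orb y x.
Proof. by move=> [z ->]; exists (- z)%R; rewrite -zitD addNr. Qed.
Lemma orb_trans x y w : orb x y -> orb y w -> orb x w.
Proof. by move=> [z hz] [z' hz']; exists (z' + z)%R; rewrite hz' hz zitD. Qed.

Lemma orbitE x : orbit_of f x = orb x.
Proof.
apply/seteqP; split => y /=.
  move=> [n [->|hx]]; first by exists n.
  by exists (- n%:Z)%R; rewrite zit_neg hx iter_g_f.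
move=> [[n|n] ->].
  by exists n; left.
by exists n.+1; right; rewrite /zit iter_f_g. Qed.

Lemma orb_fix_iff x y k : orb x y -> (iter k f x = x <-> iter k f y = y).
Proof.
move=> [z ->]; rewrite -zit_iter; split; first by move=> ->.
by apply: zit_inj.
Qed.

Lemma orb_period x y k : orb x y -> period f x k -> period f y k.
Proof.
move=> hxy [k0 [hk hmin]]; split => //; split; first by apply/(orb_fix_iff _ hxy).
by move=> j hj hy; apply: (hmin j hj); apply/(orb_fix_iff _ hxy).
Qed.

Lemma orb_nonper x y : orb x y -> nonper f x -> nonper f y.
Proof. by move=> hxy hn m m0 hm; apply: (hn m m0); apply/(orb_fix_iff _ hxy). Qed.

Lemma stab_per x k z : period f x k -> (zit z x = x <-> (k%:Z %| z)%Z).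
Proof.
move=> hp; rewrite dvdzE; case: z => n.
  by rewrite zit_pos (period_dvd _ hp).
have -> : `|Negz n|%N = n.+1 by [].
rewrite -(period_dvd _ hp); split => h.
  by rewrite -{1}h iter_f_g.
by rewrite -{1}h /zit iter_g_f.
Qed.

Lemma stab_nonper x z : nonper f x -> (zit z x = x <-> z = 0%R).
Proof.
move=> hn; split => [|->] //; case: z => [[|n]|n] //= h.
  by case: (hn n.+1 isT h).
by case: (hn n.+1 isT); rewrite -{1}h iter_f_g.
Qed.

Lemma zit_eq_iff z z' x : zit z x = zit z' x <-> zit (z - z')%R x = x.
Proof.
split => h; first by rewrite addrC zitD h -zitD addNr.
rewrite -[in LHS](subrK z' z) addrC zitD h //.
Qed.

Variable x0 : T.

Definition rep (x : T) : T := epsilon (inhabits x0) (orbit_of f x).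

Lemma rep_orb x : orb x (rep x).
Proof. rewrite -orbitE /rep; apply: epsilon_spec; exists x; rewrite orbitE; exact: orb_refl. Qed.

Lemma rep_eq x y : orb x y -> rep x = rep y.
Proof.
move=> hxy; rewrite /rep !orbitE; congr epsilon.
apply/seteqP; split => w h; [exact: orb_trans (orb_sym hxy) h | exact: orb_trans hxy h].
Qed.

Lemma rep_orbP x y : rep x = rep y <-> orb x y.
Proof.
split; last exact: rep_eq.
move=> h; apply: orb_trans (rep_orb x) _; rewrite h; exact: orb_sym (rep_orb y).
Qed.

Lemma rep_idem x : rep (rep x) = rep x.
Proof. by apply/esym/rep_eq/rep_orb. Qed.

End Zit.

End MP1.
Import MP1.

Module MP2.
Local Open Scope classical_set_scope.
Local Open Scope ring_scope.

Section Additive.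
Variable n : nat.
Local Notation V := 'rV[int]_n.

Definition addf (h : V -> V) := forall x y, h (x + y)%R = (h x + h y)%R.

Variable h : V -> V.
Hypothesis hadd : addf h.

Lemma addf0 : h 0%R = 0%R.
Proof. by apply/(@addrI _ (h 0%R)); rewrite -hadd !addr0. Qed.

Lemma addfN x : h (- x)%R = (- h x)%R.
Proof. by apply/(@addrI _ (h x)); rewrite -hadd !subrr addf0. Qed.

Lemma addfB x y : h (x - y)%R = (h x - h y)%R.
Proof. by rewrite hadd addfN. Qed.

Lemma addfMn x m : h (x *+ m)%R = (h x *+ m)%R.
Proof. by elim: m => [|m IH]; rewrite ?mulr0n ?addf0 // !mulrS hadd IH. Qed.

Lemma addfZ (a : int) x : h (a *: x)%R = (a *: h x)%R.
Proof.
rewrite -[a]intz !scaler_int; case: a => m.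
  by rewrite -!pmulrn addfMn.
by rewrite NegzE !mulrNz -!pmulrn addfN addfMn.
Qed.

Lemma addf_iter k : addf (iter k h).
Proof. by elim: k => [|k IH] x y //=; rewrite IH hadd. Qed.

Lemma addf_sum (I : Type) (r : seq I) (F : I -> V) :
  h (\sum_(i <- r) F i)%R = (\sum_(i <- r) h (F i))%R.
Proof. by elim: r => [|a r IH]; rewrite ?big_nil ?addf0 // !big_cons hadd IH. Qed.

End Additive.

Lemma addf_comp n (h1 h2 : 'rV[int]_n -> 'rV[int]_n) : addf h1 -> addf h2 -> addf (h1 \o h2).
Proof. by move=> a1 a2 x y /=; rewrite a2 a1. Qed.

Lemma addf_inv n (h hi : 'rV[int]_n -> 'rV[int]_n) : addf h -> cancel h hi -> cancel hi h -> addf hi.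
Proof. by move=> ha hK hiK x y; apply: (can_inj hK); rewrite ha !hiK. Qed.

Lemma natz_neq0 (m : nat) : (0 < m)%N -> m%:Z != 0.
Proof. by case: m. Qed.

Section Torsion.
Variable n : nat.
Local Notation V := 'rV[int]_n.

Lemma scale_inj (a : int) (x y : V) : a != 0%R -> (a *: x = a *: y)%R -> x = y.
Proof.
move=> a0 /eqP; rewrite -subr_eq0 -scalerBr scalemx_eq0 (negPf a0) /= subr_eq0.
by move/eqP.
Qed.

Lemma scale_fix (h : V -> V) (hadd : addf h) (a : int) k x : a != 0%R ->
  (iter k h (a *: x)%R = (a *: x)%R <-> iter k h x = x).
Proof.
move=> a0; rewrite (addfZ (addf_iter hadd k)); split; last by move=> ->.
exact: scale_inj.
Qed.

Lemma period_scale (h : V -> V) (hadd : addf h) (a : int) k x : a != 0%R ->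
  period h x k -> period h (a *: x)%R k.
Proof.
move=> a0 [k0 [hk hmin]]; split => //; split; first by apply/(scale_fix hadd _ _ a0).
by move=> j hj; rewrite (scale_fix hadd _ _ a0); apply: hmin.
Qed.

Lemma nonper_scale (h : V -> V) (hadd : addf h) (a : int) x : a != 0%R ->
  nonper h x -> nonper h (a *: x)%R.
Proof. by move=> a0 hn m m0; rewrite (scale_fix hadd _ _ a0); apply: hn. Qed.

Lemma descent (h : V -> V) (hadd : addf h) (a b : nat) : coprime a b -> (0 < a)%N ->
  forall t x, ((a%:Z) *: h x = (b%:Z) *: x)%R -> exists w : V, x = ((a ^ t)%N%:Z *: w)%R.
Proof.
move=> cab a0; elim=> [|t IH] x hx; first by exists x; rewrite expn0 scale1r.
have hdiv : forall i, (a%:Z %| x ord0 i)%Z.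
  move=> i; have /(congr1 (fun M : V => M ord0 i)) := hx; rewrite !mxE => e.
  have : (a%:Z %| (b%:Z * x ord0 i)%R)%Z by rewrite -e dvdz_mulr.
  by rewrite Gauss_dvdzr // coprimezE.
have [w0 ex] : exists w0 : V, x = (a%:Z *: w0)%R.
  by exists (\row_i ((x ord0 i) %/ a%:Z)%Z); apply/rowP => i; rewrite !mxE mulrC divzK.
have hw0 : ((a%:Z) *: h w0 = (b%:Z) *: w0)%R.
  apply: (@scale_inj a%:Z); first exact: natz_neq0.
  by rewrite -(addfZ hadd) -ex hx ex !scalerA mulrC.
have [w hw] := IH _ hw0; exists w.
by rewrite ex hw scalerA expnS PoszM.
Qed.

Lemma descent1 (h : V -> V) (hadd : addf h) (a b : nat) (x : V) : coprime a b -> (0 < a)%N ->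
  x != 0%R -> ((a%:Z) *: h x = (b%:Z) *: x)%R -> a = 1%N.
Proof.
move=> cab a0 x0 hx.
have [i xi0] : exists i, x ord0 i != 0%R.
  case: (pselect (exists i, x ord0 i != 0)) => // hn; exfalso; apply: (negP x0).
  apply/eqP/rowP => i; rewrite mxE; case: (eqVneq (x ord0 i) 0) => // hi.
  by exfalso; apply: hn; exists i.
have [w hw] := descent hadd cab a0 `|x ord0 i|%N hx.
have e : x ord0 i = ((a ^ `|x ord0 i|)%N%:Z * w ord0 i)%R by rewrite {1}hw mxE.
have wi0 : w ord0 i != 0%R by apply: contraNneq xi0 => w0; rewrite e w0 mulr0.
have hle : (a ^ `|x ord0 i| <= `|x ord0 i|)%N.
  move: e wi0; move: (a ^ _)%N => c; move: (x ord0 i) => y -> wi0.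
  by rewrite abszM /= -{1}[c]muln1 leq_mul2l absz_gt0 wi0 orbT.
case: a a0 {cab hx hw e} hle => [|[|a]] // _ hle; exfalso.
have : (`|x ord0 i| < a.+2 ^ `|x ord0 i|)%N by apply: ltn_expl.
by rewrite ltnNge hle.
Qed.

Lemma no_collide (G Gi : V -> V) (Gadd : addf G) (GK : cancel G Gi) (GiK : cancel Gi G)
  (x : V) (m m' : nat) : x != 0%R -> (0 < m)%N -> (0 < m')%N ->
  ((m%:Z) *: x = (m'%:Z) *: G x)%R -> m = m'.
Proof.
move=> x0 m0 m'0 e.
have Giadd := addf_inv Gadd GK GiK.
set d := gcdn m m'.
have d0 : (0 < d)%N by rewrite gcdn_gt0 m0.
have em : m = (m %/ d * d)%N by rewrite divnK // dvdn_gcdl.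
have em' : m' = (m' %/ d * d)%N by rewrite divnK // dvdn_gcdr.
set a := (m %/ d)%N in em; set b := (m' %/ d)%N in em'.
have cab : coprime a b.
  have : (gcdn a b * d == 1 * d)%N by rewrite muln_gcdl -em -em' mul1n.
  by rewrite eqn_pmul2r.
have a0 : (0 < a)%N by move: m0; rewrite em muln_gt0 => /andP [].
have b0 : (0 < b)%N by move: m'0; rewrite em' muln_gt0 => /andP [].
have e2 : ((a%:Z) *: x = (b%:Z) *: G x)%R.
  apply: (@scale_inj d%:Z); first exact: natz_neq0.
  by rewrite !scalerA -!PoszM mulnC -em mulnC -em'.
have cba : coprime b a by rewrite coprime_sym.
have hb : b = 1%N := descent1 Gadd cba b0 x0 (esym e2).
have hx' : ((a%:Z) *: Gi x = (b%:Z) *: x)%R.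
  by rewrite -(addfZ Giadd) e2 (addfZ Giadd) GK.
have ha : a = 1%N := descent1 Giadd cab a0 x0 hx'.
by rewrite em em' ha hb.
Qed.

End Torsion.

End MP2.
Import MP2.

Module MP2b.
Local Open Scope classical_set_scope.
Local Open Scope ring_scope.

Lemma subDl2 (W : zmodType) (x y z : W) : (z + x) - (z + y) = x - y.
Proof. by rewrite [z + x]addrC addrKA. Qed.

Section LcmFin.
Variable n : nat.
Local Notation V := 'rV[int]_n.
Variable g : V -> V.
Hypothesis gadd : addf g.

Lemma lcm_period v w a b : period g v a -> period g w b -> exists u, period g u (lcmn a b).
Proof.
move=> hv hw.
have a0 : (0 < a)%N by case: hv.
have b0 : (0 < b)%N by case: hw.
set L := lcmn a b.
have L0 : (0 < L)%N by rewrite lcmn_gt0 a0 b0.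
have fixL : forall m : nat, iter L g (v + m%:Z *: w) = v + m%:Z *: w.
  move=> m; rewrite (addf_iter gadd L) (addfZ (addf_iter gadd L)).
  have -> : iter L g v = v by apply/(period_dvd _ hv); rewrite dvdn_lcml.
  have -> : iter L g w = w by apply/(period_dvd _ hw); rewrite dvdn_lcmr.
  by [].
case: (pselect (exists u, period g u L)) => // hno; exfalso.
pose P (m : nat) := epsilon (inhabits 0%N) (fun p => period g (v + m%:Z *: w) p).
have PP : forall m, period g (v + m%:Z *: w) (P m).
  by move=> m; apply: epsilon_spec; exact: (period_exists L0 (fixL m)).
have Pdvd : forall m, (P m %| L)%N by move=> m; rewrite -(period_dvd _ (PP m)).
have PL : forall m, (P m < L)%N.
  move=> m; rewrite ltn_neqAle dvdn_leq // andbT; apply/eqP => e.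
  by apply: hno; exists (v + m%:Z *: w); rewrite -e.
pose F (m : 'I_L.+1) : 'I_L := Ordinal (PL m).
have : ~~ injectiveb F.
  apply/negP => /injectiveP inj; have := leq_card F inj.
  by rewrite !card_ord ltnn.
move/injectivePn => [m1 [m2 hne heq]].
have e12 : P m1 = P m2 by have := congr1 val heq.
set p := P m1.
have f1 : iter p g (v + m1%:Z *: w) = v + m1%:Z *: w by case: (PP m1) => _ [].
have f2 : iter p g (v + m2%:Z *: w) = v + m2%:Z *: w by rewrite /p e12; case: (PP m2) => _ [].
have ipa := addf_iter gadd p.
rewrite ipa (addfZ ipa) in f1; rewrite ipa (addfZ ipa) in f2.
have hw' : iter p g w = w.
  have : (m1%:Z - m2%:Z) *: iter p g w = (m1%:Z - m2%:Z) *: w.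
    by rewrite !scalerBl -(subDl2 _ _ (iter p g v)) f1 f2 subDl2.
  apply: scale_inj; rewrite subr_eq0; apply/negP => /eqP e; move: hne.
  by apply/negP/negPn/eqP/val_inj; case: e.
have hv' : iter p g v = v by move: f1; rewrite hw' => /addIr.
have p0 : (0 < p)%N by case: (PP m1).
have : (L %| p)%N.
  by rewrite dvdn_lcm; apply/andP; split; [apply/(period_dvd _ hv) | apply/(period_dvd _ hw)].
by move/(dvdn_leq p0); rewrite leqNgt PL.
Qed.

End LcmFin.

End MP2b.
Import MP2b.

Module MP2c.
Local Open Scope classical_set_scope.
Local Open Scope ring_scope.

Lemma stab_seq (r : nat -> nat) (N : nat) : (forall j, (r j <= N)%N) ->
  (forall j j', (j <= j')%N -> (r j <= r j')%N) ->
  exists J, forall j, (J <= j)%N -> r j = r J.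
Proof.
move=> hb hm.
suff : forall d J0, (N - r J0 <= d)%N -> exists J, forall j, (J <= j)%N -> r j = r J.
  by move=> /(_ N 0%N); apply; rewrite leq_subr.
elim=> [|d IH] J0 hd.
  exists J0 => j hj; have := hm J0 j hj; have := hb j; lia.
case: (pselect (exists j, (J0 <= j)%N /\ r j <> r J0)) => [[j [hj hne]]|hno].
  apply: (IH j); have := hm J0 j hj; have := hb j; lia.
exists J0 => j hj; case: (pselect (r j = r J0)) => // hne; exfalso; apply: hno; exists j; split.
- exact: hj.
- exact: hne.
Qed.

Section Fin.
Variable n : nat.
Local Notation V := 'rV[int]_n.
Variable g : V -> V.
Hypothesis gadd : addf g.

Lemma addf_mx : exists M : 'M[int]_n, forall v, g v = v *m M.
Proof.
exists (\matrix_(i, j) g (delta_mx 0 i) ord0 j) => v.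
rewrite mulmx_sum_row {1}[v]row_sum_delta (addf_sum gadd).
apply: eq_bigr => i _; rewrite (addfZ gadd); congr (_ *: _).
by apply/rowP => j; rewrite !mxE.
Qed.

Lemma fin_periods : exists N, forall v p, period g v p -> (p <= N)%N.
Proof.
have [M hM] := addf_mx.
have iterM : forall k v, iter k g v = v *m M ^+ k.
  elim=> [|k IH] v; first by rewrite expr0 mulmx1.
  by rewrite iterS IH hM exprSr -mulmxA mulmxE.
pose Mq := map_mx (intr : int -> rat) M.
have mapE : forall k (v : V), map_mx intr (v *m M ^+ k) = map_mx intr v *m Mq ^+ k.
  elim=> [|k IH] v; first by rewrite !expr0 !mulmx1.
  by rewrite !exprSr -!mulmxE !mulmxA map_mxM IH.
pose K j := kermx (Mq ^+ j`! - 1).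
have powfix : forall m (X : 'M[rat]_(m, n)) P q, X *m P = X -> X *m P ^+ q = X.
  move=> m X P q hX; elim: q => [|q IH]; first by rewrite expr0 mulmx1.
  by rewrite exprSr -mulmxE mulmxA IH hX.
have Kfix : forall m (X : 'M[rat]_(m, n)) j, (X <= K j)%MS <-> X *m Mq ^+ j`! = X.
  move=> m X j; rewrite /K; split.
    by move/sub_kermxP; rewrite mulmxBr mulmx1 => /eqP; rewrite subr_eq0 => /eqP.
  by move=> hX; apply/sub_kermxP; rewrite mulmxBr mulmx1 hX subrr.
have Kmono1 : forall j, (K j <= K j.+1)%MS.
  move=> j; apply/Kfix; rewrite factS mulnC exprM; apply: powfix.
  by apply/Kfix; exact: submx_refl.
have Kmono : forall j j', (j <= j')%N -> (K j <= K j')%MS.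
  move=> j j'; elim: j' => [|j' IH]; first by rewrite leqn0 => /eqP ->.
  rewrite leq_eqVlt => /orP [/eqP ->|]; first exact: submx_refl.
  by rewrite ltnS => /IH h; apply: submx_trans h (Kmono1 j').
have [J hJ] := @stab_seq (fun j => \rank (K j)) n (fun j => rank_leq_col _)
  (fun j j' h => mxrankS (Kmono j j' h)).
have KJ : forall j, (J <= j)%N -> (K j <= K J)%MS.
  move=> j hj; rewrite -(mxrank_leqif_sup (Kmono _ _ hj)).2 hJ //.
exists J`! => v p hp.
have p0 : (0 < p)%N by case: hp.
set j := maxn p J.
have hvj : iter j`! g v = v.
  by apply/(period_dvd _ hp); apply: dvdn_fact; rewrite p0 leq_maxl.
have hvq : (map_mx intr v <= K j)%MS.
  by apply/Kfix; rewrite -mapE -iterM hvj.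
have : (map_mx intr v <= K J)%MS by apply: submx_trans hvq (KJ _ (leq_maxr _ _)).
move/Kfix; rewrite -mapE => e.
have hJv : iter J`! g v = v.
  rewrite iterM; apply/rowP => i; move/rowP: e => /(_ i); rewrite !mxE.
  by move/intr_inj.
have : (p %| J`!)%N by rewrite -(period_dvd _ hp).
by move/dvdn_leq; apply; exact: fact_gt0.
Qed.

End Fin.

End MP2c.
Import MP2c.

Module MP3.
Local Open Scope classical_set_scope.
Local Open Scope ring_scope.

Lemma inj_infinite T (P : set T) (F : nat -> T) :
  injective F -> (forall m, P (F m)) -> infinite_set P.
Proof.
move=> Finj hP hfin.
have := finite_preimage (fun x y _ _ => Finj x y) hfin.
have -> : F @^-1` P = setT by apply/seteqP; split => // m _; exact: hP.
exact: infinite_nat.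
Qed.

Section Transport.
Variables (T U : Type) (f : T -> T) (g : U -> U) (h : U -> T).
Hypothesis hc : forall x, h (g x) = f (h x).
Hypothesis hinj : injective h.

Lemma iter_conj k x : h (iter k g x) = iter k f (h x).
Proof. by elim: k => [|k IH] //=; rewrite hc IH. Qed.

Lemma fix_conj k x : iter k f (h x) = h x <-> iter k g x = x.
Proof. by rewrite -iter_conj; split => [/hinj|->]. Qed.

Lemma period_conj x k : period f (h x) k <-> period g x k.
Proof.
split => [[k0 [hk hmin]]|[k0 [hk hmin]]]; split => //; split.
- by apply/fix_conj.
- by move=> j hj; rewrite -fix_conj; apply: hmin.
- by apply/fix_conj.
- by move=> j hj; rewrite fix_conj; apply: hmin.
Qed.

Lemma nonper_conj x : nonper f (h x) <-> nonper g x.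
Proof.
split => hn m m0; [rewrite -fix_conj | rewrite fix_conj]; exact: hn.
Qed.

End Transport.

Lemma orbit_fixed T (f : T -> T) (hf : bijective f) a : f a = a -> orbit_of f a = [set a].
Proof.
move=> fa; case: hf => fi fK fiK.
have fia : fi a = a by rewrite -{1}fa fK.
rewrite (orbitE fK fiK); apply/seteqP; split => y /=; last by move=> ->; exact: orb_refl.
move=> [z ->]; case: z => m /=.
  by elim: m => [|m IH] //=; rewrite IH fa.
by elim: m => [|m IH] //=; rewrite ?IH fia.
Qed.

Lemma orbit_self T (f : T -> T) x : orbit_of f x x.
Proof. by exists 0%N; left. Qed.

Section ForwardScale.
Variable n : nat.
Local Notation V := 'rV[int]_n.
Variables (A : Type) (f : A -> A) (g gi : V -> V) (psi : V -> A) (phi : A -> V).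
Hypothesis gadd : addf g.
Hypothesis gK : cancel g gi.
Hypothesis giK : cancel gi g.
Hypothesis psiK : cancel psi phi.
Hypothesis phiK : cancel phi psi.
Hypothesis hc : forall v, psi (g v) = f (psi v).

Lemma scaled_orbits_inj (v : V) : v != 0 ->
  injective (fun m : nat => orbit_of f (psi (m.+1%:Z *: v))).
Proof.
move=> v0 m m' e.
have psiinj : injective psi := can_inj psiK.
have iK : forall j, cancel (iter j g) (iter j gi) := iter_g_f gK.
have iiK : forall j, cancel (iter j gi) (iter j g) := iter_f_g giK.
have : orbit_of f (psi (m.+1%:Z *: v)) (psi (m.+1%:Z *: v)) by exact: orbit_self.
rewrite e => -[j [hj|hj]].
- have := congr1 phi hj; rewrite -(iter_conj hc) !psiK (addfZ (addf_iter gadd j)) => e2.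
  by have := no_collide (addf_iter gadd j) (iK j) (iiK j) v0 (ltn0Sn _) (ltn0Sn _) e2; case.
- have := congr1 phi hj; rewrite -(iter_conj hc) !psiK (addfZ (addf_iter gadd j)) => e2.
  by have := no_collide (addf_iter gadd j) (iK j) (iiK j) v0 (ltn0Sn _) (ltn0Sn _) e2; case.
Qed.

End ForwardScale.

End MP3.
Import MP3.

Module MP4.
Local Open Scope classical_set_scope.
Local Open Scope ring_scope.

Definition Cond (A : Type) (f : A -> A) (a0 : A) : Prop :=
     f a0 = a0 /\
     finite_set [set m : nat | exists C, is_cycle f C m] /\
     (forall (k : nat) (C : set A), is_cycle f C k -> C <> [set a0] ->
        infinite_set [set D : set A | is_cycle f D k]) /\
     ((exists C : set A, is_chain f C) ->
        infinite_set [set D : set A | is_chain f D]) /\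
     (forall (al be : nat) (C1 C2 : set A),
        is_cycle f C1 al -> C1 <> [set a0] ->
        is_cycle f C2 be -> C2 <> [set a0] ->
        exists C : set A, is_cycle f C (lcmn al be)).

Lemma forward (A : Type) (f : A -> A) (hf : bijective f) (n : nat) (op : A -> A -> A) :
  group_iso_Zn op n -> is_automorphism op f -> exists a0, Cond f a0.
Proof.
move=> [_ [_ [phi [[psi phiK psiK] phiop]]]] [_ fop].
have [fi fK fiK] := hf.
pose g v := phi (f (psi v)).
pose gi v := phi (fi (psi v)).
have gK : cancel g gi by move=> v; rewrite /g /gi phiK fK psiK.
have giK : cancel gi g by move=> v; rewrite /g /gi phiK fiK psiK.
have psiop : forall x y, psi (x + y) = op (psi x) (psi y).
  by move=> x y; apply: (can_inj phiK); rewrite psiK phiop !psiK.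
have gadd : addf g by move=> x y; rewrite /g psiop fop phiop.
have hc : forall v, psi (g v) = f (psi v) by move=> v; rewrite /g phiK.
have psiinj : injective psi := can_inj psiK.
have per : forall v k, period f (psi v) k <-> period g v k := period_conj hc psiinj.
have nper : forall v, nonper f (psi v) <-> nonper g v := nonper_conj hc psiinj.
have per' : forall x k, period f x k <-> period g (phi x) k.
  by move=> x k; rewrite -per phiK.
have nper' : forall x, nonper f x <-> nonper g (phi x).
  by move=> x; rewrite -nper phiK.
exists (psi 0); split; [|split; [|split; [|split]]].
- by rewrite -hc (addf0 gadd).
- have [N hN] := fin_periods gadd.
  apply: (@sub_finite_set _ _ `I_N.+1); last exact: finite_II.
  move=> m [C [x [_ hx]]] /=; rewrite ltnS; apply: (hN (phi x)); exact/per'.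
- move=> k C [x [-> hx]] hC.
  have x0 : phi x != 0.
    apply/negP => /eqP e; apply: hC; rewrite -(phiK x) e; apply: orbit_fixed => //.
    by rewrite -hc (addf0 gadd).
  apply: (inj_infinite (scaled_orbits_inj gadd gK giK psiK hc x0)) => m /=.
  exists (psi (m.+1%:Z *: phi x)); split => //; apply/per.
  by apply: (period_scale gadd (natz_neq0 (ltn0Sn m))); exact/per'.
- move=> [C [x [_ hx]]].
  have hn : nonper g (phi x) by apply/nper'.
  have x0 : phi x != 0.
    apply/negP => /eqP e; apply: (hn 1%N isT); by rewrite e /= (addf0 gadd).
  apply: (inj_infinite (scaled_orbits_inj gadd gK giK psiK hc x0)) => m /=.
  exists (psi (m.+1%:Z *: phi x)); split => //.
  have : nonper f (psi (m.+1%:Z *: phi x)).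
    by apply/nper; apply: nonper_scale => //; exact: natz_neq0.
  by move=> h; exact: h.
- move=> al be C1 C2 [x1 [_ h1]] _ [x2 [_ h2]] _.
  have [u hu] := lcm_period gadd (proj1 (per' _ _) h1) (proj1 (per' _ _) h2).
  by exists (orbit_of f (psi u)); exists (psi u); split => //; apply/per.
Qed.

End MP4.
Import MP4.

Module MP5.
Local Open Scope classical_set_scope.
Local Open Scope ring_scope.

Lemma mapmx_pow (aR rR : nzRingType) (f : {rmorphism aR -> rR}) n (M : 'M[aR]_n) k :
  map_mx f (M ^+ k) = map_mx f M ^+ k.
Proof.
elim: k => [|k IH]; first by rewrite !expr0 map_mx1.
by rewrite !exprS -!mulmxE map_mxM IH.
Qed.

Lemma comp_noper (m : nat) (B : 'M[int]_m.+1) (k : nat) :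
  (forall z : algC, root (map_poly intr (char_poly B)) z -> z ^+ k != 1) ->
  forall v : 'rV[int]_m.+1, v *m B ^+ k = v -> v = 0.
Proof.
move=> hz v hv.
pose BC := map_mx (intr : int -> algC) B.
have hcp : char_poly BC = map_poly intr (char_poly B) by rewrite map_char_poly.
pose q : {poly algC} := 'X^k - 1.
have cop : coprimep (char_poly BC) q.
  apply: Pdiv.ClosedField.root_coprimep => z; rewrite hcp => hr.
  by rewrite /q !hornerE subr_eq0; apply: hz.
have /Bezout_eq1_coprimepP [[u1 u2] /= hu] := cop.
have H1 : horner_mx BC (u1 * char_poly BC + u2 * q) = 1 by rewrite hu rmorph1.
rewrite rmorphD !rmorphM /= Cayley_Hamilton mulr0 add0r -rmorphM mulrC rmorphM in H1.
have Hq : horner_mx BC q = BC ^+ k - 1.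
  by rewrite /q rmorphB /= rmorphXn /= horner_mx_X rmorph1.
have vC : map_mx intr v *m BC ^+ k = map_mx intr v.
  by rewrite /BC -mapmx_pow -map_mxM hv.
have vC0 : map_mx intr v *m horner_mx BC q = 0 by rewrite Hq mulmxBr mulmx1 vC subrr.
have : map_mx (intr : int -> algC) v = 0.
  have -> : map_mx (intr : int -> algC) v = map_mx intr v *m (horner_mx BC q * horner_mx BC u2).
    by rewrite H1 mulmx1.
  by rewrite -mulmxE mulmxA vC0 mul0mx.
move/rowP => h; apply/rowP => i; move: (h i); rewrite !mxE.
by move/eqP; rewrite intr_eq0 => /eqP.
Qed.

End MP5.
Import MP5.

Module MP6.
Local Open Scope classical_set_scope.
Local Open Scope ring_scope.

Definition realizes (n : nat) (g : 'rV[int]_n -> 'rV[int]_n) (S : nat -> Prop) (c : Prop) :=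
  [/\ addf g, (exists gi, cancel g gi /\ cancel gi g),
   (forall v k, v != 0 -> period g v k -> S k),
   (forall k, S k -> exists v, v != 0 /\ period g v k) &
   ((exists v, nonper g v) <-> c)].

Lemma exists_charpoly (p : {poly int}) m : p \is monic -> size p = m.+2 ->
  exists B : 'M[int]_m.+1, char_poly B = p.
Proof.
move=> mon hs.
have e : (size p).-1 = m.+1 by rewrite hs.
exists (castmx (e, e) (companionmx p)).
have := companionmxK mon; move: (companionmx p) => C.
move: e C; move: (size p).-1 => N e; case: _ / e => C hC.
by rewrite castmx_id.
Qed.

Lemma delta_neq0 m : (delta_mx 0 0 : 'rV[int]_m.+1) != 0.
Proof. by apply/eqP => /rowP /(_ 0); rewrite !mxE. Qed.

Lemma mul_block (m : nat) (B : 'M[int]_m.+1) :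
  let g := fun v : 'rV[int]_m.+1 => v *m B in
  addf g /\ forall k v, iter k g v = v *m B ^+ k.
Proof.
move=> g; split; first by move=> x y; rewrite /g mulmxDl.
elim=> [|k IH] v; first by rewrite expr0 mulmx1.
by rewrite iterS IH /g exprSr -mulmxE mulmxA.
Qed.

Lemma cyc_block d : (0 < d)%N -> exists n g, realizes (n:=n) g (fun k => k = d) False.
Proof.
move=> d0.
have tot0 : (0 < totient d)%N by rewrite totient_gt0.
have hs : size ('Phi_d) = (totient d).-1.+2 by rewrite size_Cyclotomic prednK.
have [B hB] := exists_charpoly (Cyclotomic_monic d) hs.
have [gadd iterB] := mul_block B.
set g := fun v => v *m B in gadd iterB.
have [z0 pz0] := C_prim_root_exists d0.
have roots : forall z : algC, root (map_poly intr (char_poly B)) z -> d.-primitive_root z.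
  by move=> z; rewrite hB (Cintr_Cyclotomic pz0) (root_cyclotomic pz0).
have Bd : B ^+ d = 1.
  have hX : ('X^d - 1 : {poly int}) = 'Phi_d * \prod_(d' <- rem d (divisors d)) 'Phi_d'.
    by rewrite -(prod_Cyclotomic d0) (big_rem d) // -dvdn_divisors.
  have := Cayley_Hamilton B; rewrite hB => hC.
  have : horner_mx B ('X^d - 1) = 0 by rewrite hX rmorphM /= hC mul0r.
  rewrite rmorphB /= rmorphXn /= horner_mx_X rmorph1 => /eqP.
  by rewrite subr_eq0 => /eqP.
have per : forall v, v != 0 -> period g v d.
  move=> v v0; split => //; split; first by rewrite iterB Bd mulmx1.
  move=> j /andP [j0 jd] hj; apply: (negP v0); apply/eqP.
  apply: (@comp_noper _ B j); last by move: hj; rewrite iterB.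
  move=> z /roots pz; rewrite -(prim_order_dvd pz); apply/negP => /(dvdn_leq j0).
  by rewrite leqNgt jd.
exists (totient d).-1.+1, g; split => //.
- exists (fun v => v *m B ^+ d.-1).
  have e : B * B ^+ d.-1 = 1 by rewrite -exprS (prednK d0) Bd.
  have e' : B ^+ d.-1 * B = 1 by rewrite -exprSr (prednK d0) Bd.
  by split => v; rewrite /g -mulmxA mulmxE ?e ?e' mulmx1.
- by move=> v k v0 hk; apply: (period_unique hk); exact: per.
- by move=> k ->; exists (delta_mx 0 0); split; [exact: delta_neq0 | exact: (per _ (delta_neq0 _))].
- split => // [[v hv]]; apply: (hv d d0); by rewrite iterB Bd mulmx1.
Qed.

Lemma hyp_roots (z : algC) (k : nat) : (0 < k)%N -> (z - 3) * z + 1 = 0 -> z ^+ k != 1.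
Proof.
move=> k0 hz; apply/negP => /eqP zk.
have z0 : z != 0 by apply/eqP => e; move: hz; rewrite e mulr0 add0r => /eqP; rewrite oner_eq0.
have nz : `|z| = 1.
  apply/eqP; rewrite -(pexpr_eq1 k0) ?normr_ge0 // -normrX zk normr1 //.
have h3 : z + z^-1 = 3.
  apply: (mulIf z0); rewrite mulrDl mulVf //.
  have e : z * z + 1 - 3 * z = (z - 3) * z + 1 by ring.
  by apply/eqP; rewrite -subr_eq0 e hz.
have : `|z + z^-1| <= `|z| + `|z^-1| := ler_normD _ _.
by rewrite h3 normrV ?unitfE // nz invr1 normr_nat -mulr2n ler_nat.
Qed.

Lemma hyp_block : exists n g, realizes (n:=n) g (fun _ => False) True.
Proof.
pose p : {poly int} := ('X - 3%:P) * 'X + 1%:P.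
have hs : size p = 1.+2.
  by rewrite /p size_MXaddC size_XsubC oner_eq0 andbF.
have mon : p \is monic.
  rewrite monicE /p lead_coefDl ?lead_coefMX ?lead_coefXsubC //.
  by rewrite size_polyC oner_eq0 size_mulX ?size_XsubC // -size_poly_eq0 size_XsubC.
have [B hB] := exists_charpoly mon hs.
have [gadd iterB] := mul_block B.
set g := fun v => v *m B in gadd iterB.
have noper : forall v k, (0 < k)%N -> iter k g v = v -> v = 0.
  move=> v k k0 hk; apply: (@comp_noper _ B k); last by move: hk; rewrite iterB.
  move=> z; rewrite hB /p rmorphD rmorphM rmorphB /= map_polyX map_polyC /= rootE !hornerE.
  move=> /eqP hz; apply: hyp_roots k0 _; move: hz; rewrite map_polyC hornerC; exact: id.
exists 2%N, g; split => //.
- have BC := Cayley_Hamilton B; rewrite hB /p rmorphD rmorphM rmorphB /= in BC.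
  rewrite horner_mx_X !horner_mx_C in BC.
  have B3 : B * 3%:M = 3%:M * B by rewrite -!mulmxE scalar_mxC.
  have BB : 3%:M * B - B * B = 1.
    move/eqP: BC; rewrite mulrBl addr_eq0 => /eqP e.
    by rewrite -opprB e opprK.
  exists (fun v => v *m (3%:M - B)).
  have e : B * (3%:M - B) = 1 by rewrite mulrBr B3.
  have e' : (3%:M - B) * B = 1 by rewrite mulrBl.
  by split => v; rewrite /g -mulmxA mulmxE ?e ?e' mulmx1.
- move=> v k v0 [k0 [hk _]]; apply: (negP v0); apply/eqP; exact: noper hk.
- split => // _; exists (delta_mx 0 0) => m m0 hm.
  by apply: (negP (delta_neq0 1)); apply/eqP; exact: noper hm.
Qed.


End MP6.
Import MP6.

Module MP7.
Local Open Scope classical_set_scope.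
Local Open Scope ring_scope.

Lemma period_of_dvd T (f : T -> T) x L : (0 < L)%N ->
  (forall j, iter j f x = x <-> (L %| j)%N) -> period f x L.
Proof.
move=> L0 h; split => //; split; first by apply/h.
move=> j /andP [j0 jL] /h /(dvdn_leq j0); by rewrite leqNgt jL.
Qed.

Lemma realizes_ext n (g : 'rV[int]_n -> 'rV[int]_n) S c S' c' :
  realizes g S c -> (forall k, S k <-> S' k) -> (c <-> c') -> realizes g S' c'.
Proof.
move=> [h1 h2 h3 h4 h5] hS hc; split => //.
- by move=> v k v0 hk; apply/hS; exact: h3 hk.
- by move=> k /hS; exact: h4.
- by rewrite -hc.
Qed.

Lemma trivial_block : realizes (n:=0) id (fun _ => False) False.
Proof.
have v0 : forall v : 'rV[int]_0, v = 0 by move=> v; apply/rowP => -[i hi].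
split => //.
- by exists id.
- by move=> v k; rewrite (v0 v) eqxx.
- by split => // -[v hv]; apply: (hv 1%N isT).
Qed.

Lemma lsubmxD m n1 n2 (x y : 'M[int]_(m, n1 + n2)) : lsubmx (x + y) = lsubmx x + lsubmx y.
Proof. by rewrite -{1}(hsubmxK x) -{1}(hsubmxK y) add_row_mx row_mxKl. Qed.
Lemma rsubmxD m n1 n2 (x y : 'M[int]_(m, n1 + n2)) : rsubmx (x + y) = rsubmx x + rsubmx y.
Proof. by rewrite -{1}(hsubmxK x) -{1}(hsubmxK y) add_row_mx row_mxKr. Qed.

Lemma row_mx_neq0l m n1 n2 (x : 'M[int]_(m, n1)) (y : 'M[int]_(m, n2)) : x != 0 -> row_mx x y != 0.
Proof. by move=> x0; apply/eqP; rewrite -row_mx0 => /eq_row_mx [h _]; rewrite h eqxx in x0. Qed.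
Lemma row_mx_neq0r m n1 n2 (x : 'M[int]_(m, n1)) (y : 'M[int]_(m, n2)) : y != 0 -> row_mx x y != 0.
Proof. by move=> y0; apply/eqP; rewrite -row_mx0 => /eq_row_mx [_ h]; rewrite h eqxx in y0. Qed.

Section Sum.
Variables (n1 n2 : nat) (g1 : 'rV[int]_n1 -> 'rV[int]_n1) (g2 : 'rV[int]_n2 -> 'rV[int]_n2).
Variables (S1 S2 : nat -> Prop) (c1 c2 : Prop).
Hypothesis r1 : realizes g1 S1 c1.
Hypothesis r2 : realizes g2 S2 c2.

Let G (v : 'rV[int]_(n1 + n2)) := row_mx (g1 (lsubmx v)) (g2 (rsubmx v)).

Lemma iterG k x y : iter k G (row_mx x y) = row_mx (iter k g1 x) (iter k g2 y).
Proof. by elim: k => [|k IH] //=; rewrite IH /G row_mxKl row_mxKr. Qed.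

Lemma fixG k x y : iter k G (row_mx x y) = row_mx x y <-> iter k g1 x = x /\ iter k g2 y = y.
Proof. rewrite iterG; split; [exact: eq_row_mx | by case=> -> ->]. Qed.

Lemma realizes_sum : realizes G (fun k => S1 k \/ S2 k \/ exists a b, S1 a /\ S2 b /\ k = lcmn a b)
  (c1 \/ c2).
Proof.
case: r1 => a1 [gi1 [k1 ki1]] p1 e1 n1e; case: r2 => a2 [gi2 [k2 ki2]] p2 e2 n2e.
have g10 : g1 0 = 0 := addf0 a1.
have g20 : g2 0 = 0 := addf0 a2.
have it10 : forall k, iter k g1 0 = 0 by elim=> //= k ->.
have it20 : forall k, iter k g2 0 = 0 by elim=> //= k ->.
have plcm : forall x y a b, period g1 x a -> period g2 y b -> period G (row_mx x y) (lcmn a b).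
  move=> x y a b ha hb; apply: period_of_dvd; first by rewrite lcmn_gt0; case: ha => -> _; case: hb.
  move=> j; rewrite fixG dvdn_lcm (period_dvd _ ha) (period_dvd _ hb).
  by split => [[-> ->]|/andP [-> ->]].
have p10 : period g1 0 1 by split => //; split => // j /andP [j0 j1]; move: j0 j1; case: j.
have p20 : period g2 0 1 by split => //; split => // j /andP [j0 j1]; move: j0 j1; case: j.
split.
- move=> x y; rewrite /G lsubmxD rsubmxD a1 a2 add_row_mx //.
- exists (fun v => row_mx (gi1 (lsubmx v)) (gi2 (rsubmx v))); split => v.
    by rewrite /G row_mxKl row_mxKr k1 k2 hsubmxK.
  by rewrite /G row_mxKl row_mxKr ki1 ki2 hsubmxK.
- move=> v k; rewrite -(hsubmxK v); move: (lsubmx v) (rsubmx v) => x y v0 hk.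
  have k0 : (0 < k)%N by case: hk.
  have [fx fy] : iter k g1 x = x /\ iter k g2 y = y by apply/fixG; case: hk => _ [].
  have [a ha] := period_exists k0 fx.
  have [b hb] := period_exists k0 fy.
  case: (eqVneq x 0) => [x0|x0].
    have yn0 : y != 0 by apply: contraNneq v0 => y0; rewrite x0 y0 row_mx0.
    right; left; rewrite x0 in hk.
    have := plcm _ _ _ _ p10 hb; rewrite lcm1n => hb'.
    rewrite (period_unique hk hb'); exact: (p2 y b yn0 hb).
  case: (eqVneq y 0) => [y0|y0].
    left; rewrite y0 in hk.
    have := plcm _ _ _ _ ha p20; rewrite lcmn1 => ha'.
    rewrite (period_unique hk ha'); exact: (p1 x a x0 ha).
  right; right; exists a, b; split; first exact: p1 x a x0 ha.
  split; first exact: p2 y b y0 hb.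
  exact: period_unique hk (plcm _ _ _ _ ha hb).
- move=> k [hk|[hk|[a [b [ha [hb ->]]]]]].
  + have [x [x0 hx]] := e1 _ hk; exists (row_mx x 0); split.
      exact: row_mx_neq0l.
    by have := plcm _ _ _ _ hx p20; rewrite lcmn1.
  + have [y [y0 hy]] := e2 _ hk; exists (row_mx 0 y); split.
      exact: row_mx_neq0r.
    by have := plcm _ _ _ _ p10 hy; rewrite lcm1n.
  + have [x [x0 hx]] := e1 _ ha; have [y [y0 hy]] := e2 _ hb; exists (row_mx x y); split.
      exact: row_mx_neq0l.
    exact: plcm.
- split.
  + move=> [v hv]; move: hv; rewrite -(hsubmxK v); move: (lsubmx v) (rsubmx v) => x y hv.
    case: (per_or_nonper g1 x) => [[a ha]|hx]; last by left; apply/n1e; exists x.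
    case: (per_or_nonper g2 y) => [[b hb]|hy]; last by right; apply/n2e; exists y.
    exfalso; have := plcm _ _ _ _ ha hb => hab.
    exact: period_nonper hab hv.
  + move=> [/n1e [x hx]|/n2e [y hy]].
      exists (row_mx x 0) => m m0 /fixG [hm _]; exact: hx m m0 hm.
    exists (row_mx 0 y) => m m0 /fixG [_ hm]; exact: hy m m0 hm.
Qed.

End Sum.

End MP7.
Import MP7.

Module MP8.
Local Open Scope classical_set_scope.
Local Open Scope ring_scope.

Lemma build_list (S : nat -> Prop) (hS : forall a b, S a -> S b -> S (lcmn a b))
  (hpos : forall k, S k -> (0 < k)%N) (s : seq nat) :
  (forall k, k \in s -> S k) ->
  exists n (g : 'rV[int]_n -> 'rV[int]_n) (P : nat -> Prop),
    realizes g P False /\ (forall k, P k -> S k) /\ (forall k, k \in s -> P k).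
Proof.
elim: s => [|d s IH] hs.
  by exists 0%N, id, (fun _ => False); split; [exact: trivial_block | split].
have [n [g [P [rg [PS sP]]]]] : exists n (g : 'rV[int]_n -> 'rV[int]_n) (P : nat -> Prop),
    realizes g P False /\ (forall k, P k -> S k) /\ (forall k, k \in s -> P k).
  by apply: IH => k hk; apply: hs; rewrite in_cons hk orbT.
have Sd : S d by apply: hs; exact: mem_head.
have [n' [g' rg']] := cyc_block (hpos d Sd).
have rs := realizes_sum rg rg'.
exists (n + n')%N; eexists; exists (fun k => P k \/ k = d \/ exists a, P a /\ k = lcmn a d).
split.
  apply: (realizes_ext rs); last by split => [[]|].
  move=> k; split => [[h|[h|[a [b [ha [hb ->]]]]]]|[h|[h|[a [ha ->]]]]].
  - by left.
  - by right; left.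
  - by right; right; exists a; split => //; rewrite hb.
  - by left.
  - by right; left.
  - by right; right; exists a, d.
split.
  move=> k [h|[->|[a [ha ->]]]]; [exact: PS | exact: Sd | exact: hS (PS _ ha) Sd].
move=> k; rewrite in_cons => /orP [/eqP ->|hk]; first by right; left.
by left; apply: sP.
Qed.

Lemma lattice_exists (S : set nat) (c : Prop) : finite_set S ->
  (forall a b, S a -> S b -> S (lcmn a b)) -> (forall k, S k -> (0 < k)%N) ->
  exists n (g : 'rV[int]_n -> 'rV[int]_n), realizes g S c.
Proof.
move=> /finite_seqP [s hs] hS hpos.
have hsS : forall k, k \in s -> S k by move=> k hk; rewrite hs.
have [n [g [P [rg [PS sP]]]]] := build_list hS hpos hsS.
have PSe : forall k, P k <-> S k.
  by move=> k; split; [exact: PS | rewrite hs => hk; exact: sP].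
case: (pselect c) => hc.
  have [n' [g' rg']] := hyp_block.
  have rs := realizes_sum rg rg'.
  exists (n + n')%N; eexists; apply: (realizes_ext rs); last by split => // _; right.
  move=> k; rewrite -PSe; split => [[h|[h|[a [b [_ [hb _]]]]]]|h] //; by left.
exists n, g; apply: (realizes_ext rg) => //; split => //.
Qed.

End MP8.
Import MP8.

Module MP9.
Local Open Scope classical_set_scope.

Definition typ (T : Type) (f : T -> T) (r : T) (t : option nat) : Prop :=
  match t with Some k => period f r k | None => nonper f r end.

Section Reps.
Variables (T : Type) (f fi : T -> T) (fK : cancel f fi) (fiK : cancel fi f) (x0 : T).

Definition R (t : option nat) : set T := [set r | rep f x0 r = r /\ typ f r t].

Lemma typ_exists r : exists t, typ f r t.
Proof. by case: (per_or_nonper f r) => [[p hp]|hn]; [exists (Some p) | exists None]. Qed.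

Lemma typ_unique r t t' : typ f r t -> typ f r t' -> t = t'.
Proof.
case: t => [k|]; case: t' => [k'|] //= h h'.
- by rewrite (period_unique h h').
- by case: (period_nonper h h').
- by case: (period_nonper h' h).
Qed.

Lemma typ_orb x y t : orb f fi x y -> typ f x t -> typ f y t.
Proof. case: t => [k|] /= hxy; [exact: orb_period | exact: orb_nonper]. Qed.

Lemma stab_typ r t z : typ f r t ->
  (zit f fi z r = r <-> match t with Some k => (k%:Z %| z)%Z | None => z = 0%R end).
Proof. by case: t => [k|] /= h; [exact: stab_per | exact: stab_nonper]. Qed.

Lemma orb_set x y : orb f fi x y -> orb f fi x = orb f fi y.
Proof.
move=> hxy; apply/seteqP; split => w /= h.
  by have := orb_trans fK fiK (orb_sym fK fiK hxy) h.
by have := orb_trans fK fiK hxy h.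
Qed.

Lemma R_inf_cycle k : infinite_set [set D | is_cycle f D k] -> infinite_set (R (Some k)).
Proof.
move=> hinf hfin; apply: hinf.
apply: (@sub_finite_set _ _ ((orbit_of f) @` R (Some k))); last exact: finite_image.
move=> D [x [-> hx]]; exists (rep f x0 x).
  split; first exact: (rep_idem fK fiK).
  exact: (orb_period fK fiK (rep_orb fK fiK x0 x) hx).
rewrite !(orbitE fK fiK); apply/esym/orb_set; exact: rep_orb.
Qed.

Lemma R_inf_chain : infinite_set [set D | is_chain f D] -> infinite_set (R None).
Proof.
move=> hinf hfin; apply: hinf.
apply: (@sub_finite_set _ _ ((orbit_of f) @` R None)); last exact: finite_image.
move=> D [x [-> hx]]; exists (rep f x0 x).
  split; first exact: (rep_idem fK fiK).
  exact: (orb_nonper fK fiK (rep_orb fK fiK x0 x) hx).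
rewrite !(orbitE fK fiK); apply/esym/orb_set; exact: rep_orb.
Qed.

Lemma rep_fixed : f x0 = x0 -> rep f x0 x0 = x0.
Proof.
move=> fx; have bf : bijective f by exists fi.
have := rep_orb fK fiK x0 x0; rewrite -(orbitE fK fiK) (orbit_fixed bf fx).
by move=> ->.
Qed.

Lemma period_fixed : f x0 = x0 -> period f x0 1.
Proof. by move=> fx; split => //; split => // j /andP [j0 j1]; move: j0 j1; case: j. Qed.

End Reps.

Lemma card_cases (A : Type) (V : pointedType) (X : set A) (Y : set V) (a : A) (b : V) :
  countable X -> countable Y ->
  (infinite_set X /\ infinite_set Y) \/ (X = set0 /\ Y = set0) \/ (X = [set a] /\ Y = [set b]) ->
  exists s, set_bij X Y s.
Proof.
move=> cX cY [[iX iY]|[[-> ->]|[-> ->]]]; apply/card_set_bijP.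
- have eX := eq_card_nat cX iX; have eY := eq_card_nat cY iY.
  by apply: card_eq_trans eX _; rewrite card_eq_sym.
- exact: card_eq00.
- exact: eq_card1.
Qed.

End MP9.
Import MP9.

Module MP10.
Local Open Scope classical_set_scope.

Section Conj.
Variables (A : Type) (V : pointedType).
Variables (f fi : A -> A) (fK : cancel f fi) (fiK : cancel fi f).
Variables (g gi : V -> V) (gK : cancel g gi) (giK : cancel gi g).
Variables (a0 : A) (b0 : V).
Hypothesis fa0 : f a0 = a0.
Hypothesis gb0 : g b0 = b0.
Hypothesis cA : countable [set: A].
Hypothesis cV : countable [set: V].
Hypothesis HP : forall k, (exists x, x <> a0 /\ period f x k) <-> (exists v, v <> b0 /\ period g v k).
Hypothesis HC : (exists x, nonper f x) <-> (exists v, nonper g v).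
Hypothesis IF1 : forall k, (exists x, x <> a0 /\ period f x k) -> infinite_set [set D | is_cycle f D k].
Hypothesis IF2 : (exists x, nonper f x) -> infinite_set [set D | is_chain f D].
Hypothesis IG1 : forall k, (exists v, v <> b0 /\ period g v k) -> infinite_set [set D | is_cycle g D k].
Hypothesis IG2 : (exists v, nonper g v) -> infinite_set [set D | is_chain g D].

Local Notation Rf := (R f a0).
Local Notation Rg := (R g b0).

Lemma R_small (T : Type) (h hi : T -> T) (hK : cancel h hi) (hiK : cancel hi h) (c0 : T) k :
  h c0 = c0 -> ~ (exists x, x <> c0 /\ period h x k) ->
  R h c0 (Some k) = if k == 1%N then [set c0] else set0.
Proof.
move=> hc0 hn; apply/seteqP; split => r.
  move=> [rr hr]; have rc : r = c0.
    by case: (pselect (r = c0)) => // hne; exfalso; apply: hn; exists r.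
  subst r; have := period_unique hr (period_fixed hc0); move=> ->; by rewrite eqxx.
case: eqP => [->|//] /= ->; split; [exact: (rep_fixed hK hiK hc0) | exact: period_fixed].
Qed.

Lemma bij_types : forall t, exists s, set_bij (Rf t) (Rg t) s.
Proof.
move=> t; apply: (@card_cases _ _ _ _ a0 b0).
- by apply: sub_countable cA; apply: subset_card_le.
- by apply: sub_countable cV; apply: subset_card_le.
case: t => [k|].
  case: (pselect (exists x, x <> a0 /\ period f x k)) => hk.
    left; split; first exact: (R_inf_cycle fK fiK) (IF1 hk).
    by apply: (R_inf_cycle gK giK); apply: IG1; apply/HP.
  have hk' : ~ (exists v, v <> b0 /\ period g v k) by rewrite -HP.
  rewrite (R_small fK fiK fa0 hk) (R_small gK giK gb0 hk').
  by case: eqP => _; [right; right | right; left].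
case: (pselect (exists x, nonper f x)) => hc.
  left; split; first exact: (R_inf_chain fK fiK) (IF2 hc).
  by apply: (R_inf_chain gK giK); apply: IG2; apply/HC.
have hc' : ~ (exists v, nonper g v) by rewrite -HC.
by right; left; split; apply/seteqP; split => // r [_ hr]; [apply: hc | apply: hc']; exists r.
Qed.

Lemma conj_exists : exists h : A -> V, bijective h /\ forall x, h (f x) = g (h x).
Proof.
have [Sig hSig] := boolp.choice bij_types.
pose ty (r : A) := epsilon (inhabits None) (typ f r).
have tyP : forall r, typ f r (ty r) by move=> r; apply: epsilon_spec; exact: typ_exists.
pose tyg (r : V) := epsilon (inhabits None) (typ g r).
have tygP : forall r, typ g r (tyg r) by move=> r; apply: epsilon_spec; exact: typ_exists.
pose repf := rep f a0; pose repg := rep g b0.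
pose sig r := Sig (ty r) r.
pose off x := epsilon (inhabits 0%R) (fun z => x = zit f fi z (repf x)).
have offP : forall x, x = zit f fi (off x) (repf x).
  move=> x; apply: (epsilon_spec (inhabits 0%R) (fun z => x = zit f fi z (repf x))); have [z hz] := rep_orb fK fiK a0 x.
  by exists (- z)%R; rewrite (zitN fK fiK (esym hz)).
have repR : forall x, Rf (ty (repf x)) (repf x).
  by move=> x; split; [exact: (rep_idem fK fiK) | exact: tyP].
have sigR : forall r, Rf (ty r) r -> Rg (ty r) (sig r).
  by move=> r hr; case: (hSig (ty r)) => hfun _ _; exact: hfun.
have stabT : forall r z, Rf (ty r) r ->
    (zit f fi z r = r <-> zit g gi z (sig r) = sig r).
  move=> r z hr; have [_ hv] := sigR r hr; case: hr => _ hr.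
  by rewrite (stab_typ fK fiK z hr) (stab_typ gK giK z hv).
have eqT : forall r z z', Rf (ty r) r ->
    (zit f fi z r = zit f fi z' r <-> zit g gi z (sig r) = zit g gi z' (sig r)).
  by move=> r z z' hr; rewrite (zit_eq_iff fK fiK) (zit_eq_iff gK giK); exact: stabT.
pose h x := zit g gi (off x) (sig (repf x)).
have hc : forall x, h (f x) = g (h x).
  move=> x; rewrite /h.
  have e : repf (f x) = repf x.
    by apply/esym/(rep_eq fK fiK); exists 1%R.
  rewrite e -(zitS giK); apply/(eqT _ _ _ (repR x)).
  by rewrite (zitS fiK) -offP -e -offP.
have hinj : injective h.
  move=> x y; rewrite /h => hxy.
  have e1 : repg (sig (repf x)) = sig (repf x).
    by case: (sigR _ (repR x)).
  have e2 : repg (sig (repf y)) = sig (repf y).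
    by case: (sigR _ (repR y)).
  have hs : sig (repf x) = sig (repf y).
    rewrite -e1 -e2; apply/(rep_orbP gK giK).
    exists (- off y + off x)%R; rewrite (zitD gK giK) hxy -(zitD gK giK) addNr.
    by [].
  have ht : ty (repf x) = ty (repf y).
    have [_ h1] := sigR _ (repR x); have [_ h2] := sigR _ (repR y).
    by rewrite hs in h1; exact: (typ_unique h1 h2).
  have hr : repf x = repf y.
    case: (hSig (ty (repf x))) => _ hinj _; apply: hinj.
    - by rewrite in_setE; exact: repR.
    - by rewrite in_setE ht; exact: repR.
    - by move: hs; rewrite /sig ht.
  rewrite (offP x) (offP y) -hr; apply/(eqT _ _ _ (repR x)).
  by rewrite hr -hxy -hr.
have hsurj : forall v, exists x, h x = v.
  move=> v; set r' := repg v; set t := tyg r'.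
  have r'R : Rg t r' by split; [exact: (rep_idem gK giK) | exact: tygP].
  case: (hSig t) => _ _ hsurj; have [r rR er] := hsurj _ r'R.
  have hty : ty r = t by case: rR => _ h1; exact: (typ_unique (tyP r) h1).
  have rR' : Rf (ty r) r by rewrite hty.
  have hsig : sig r = r' by rewrite /sig hty.
  have [z hz] := rep_orb gK giK b0 v.
  have ev : v = zit g gi (- z)%R r' by rewrite (zitN gK giK (esym hz)).
  exists (zit f fi (- z)%R r).
  have erep : repf (zit f fi (- z)%R r) = r.
    by rewrite -{2}(proj1 rR) /repf; apply/esym/(rep_eq fK fiK); exists (- z)%R.
  rewrite /h erep hsig ev -hsig; apply/(eqT _ _ _ rR').
  by rewrite -{2}erep -offP.
pose hi v := epsilon (inhabits a0) (fun x => h x = v).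
have hiK : cancel hi h by move=> v; apply: (epsilon_spec (inhabits a0) (fun x => h x = v)); exact: hsurj.
exists h; split => //; exists hi => // x; apply: hinj; exact: hiK.
Qed.

End Conj.

End MP10.
Import MP10.

Module MP11.
Local Open Scope classical_set_scope.


Lemma backward (A : Type) (hA : countably_infinite A) (f : A -> A) (hf : bijective f) (a0 : A) :
  Cond f a0 -> exists (n : nat) (op : A -> A -> A),
      (0 < n)%N /\ group_iso_Zn op n /\ is_automorphism op f.
Proof.
move=> [fa0 [hfin [h3 [h4 h5]]]].
have [fi fK fiK] := hf.
pose S : set nat := fun k => exists x, x <> a0 /\ period f x k.
pose c := exists x, nonper f x.
have cyc_of : forall x k, period f x k -> is_cycle f (orbit_of f x) k.
  by move=> x k hx; exists x.
have cyc_ne : forall x, x <> a0 -> orbit_of f x <> [set a0].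
  by move=> x xa e; apply: xa; have := orbit_self f x; rewrite e.
have finS : finite_set S.
  apply: sub_finite_set hfin => k [x [_ hx]]; exists (orbit_of f x); exact: cyc_of.
have lcmS : forall a b, S a -> S b -> S (lcmn a b).
  move=> a b [xa [xa0 ha]] [xb [xb0 hb]].
  have [C [x [_ hx]]] := h5 a b _ _ (cyc_of _ _ ha) (cyc_ne _ xa0) (cyc_of _ _ hb) (cyc_ne _ xb0).
  case: (pselect (x = a0)) => [ex|nx]; last by exists x.
  have l1 : lcmn a b = 1%N.
    by rewrite ex in hx; apply: (period_unique hx); exact: period_fixed.
  have a1 : a = 1%N by apply/eqP; rewrite -dvdn1 -l1 dvdn_lcml.
  by rewrite l1 -a1; exists xa.
have posS : forall k, S k -> (0 < k)%N by move=> k [x [_ [hk _]]].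
have [n [g rg]] := lattice_exists c finS lcmS posS.
case: rg => gadd [gi [gK giK]] pS eS nC.
have g0 : g 0%R = 0%R := addf0 gadd.
have cA : countable [set: A].
  case: hA => e [ei eK eiK]; apply/countable_injP; exists ei => x y _ _ h.
  by rewrite -(eiK x) h eiK.
have : exists h : A -> 'rV[int]_n, bijective h /\ forall x, h (f x) = g (h x).
  apply: (@conj_exists A ('rV[int]_n) f fi fK fiK g gi gK giK a0 0%R fa0 g0 cA (countableP _)).
  - move=> k; split => [hk|[v [v0 hv]]].
    by have [v [v0 hv]] := eS k hk; exists v; split => //; apply/eqP.
  by apply: (pS v); [apply/eqP | ].
  - by rewrite nC.
  - move=> k [x [xa hx]]; exact: (h3 k _ (cyc_of _ _ hx) (cyc_ne _ xa)).
  - by move=> [x hx]; apply: h4; exists (orbit_of f x), x.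
  - move=> k [v [v0 hv]].
  have v0' : v != 0%R by apply/eqP.
  apply: (inj_infinite (@scaled_orbits_inj n _ g g gi id id gadd gK giK (fun _ => erefl) (fun _ => erefl) v v0')).
  move=> m /=; exists (m.+1%:Z *: v)%R; split => //.
  exact: (period_scale gadd (natz_neq0 (ltn0Sn m)) hv).
  - move=> [v hv].
  have v0' : v != 0%R by apply/eqP => e; apply: (hv 1%N isT); rewrite e /= g0.
  apply: (inj_infinite (@scaled_orbits_inj n _ g g gi id id gadd gK giK (fun _ => erefl) (fun _ => erefl) v v0')).
  move=> m /=; exists (m.+1%:Z *: v)%R; split => //.
  exact: (nonper_scale gadd (natz_neq0 (ltn0Sn m)) hv).
move=> [h [hbij hh]]; have [hi hK hiK] := hbij.
have n0 : (0 < n)%N.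
  have [x xa] : exists x, x <> a0.
    case: hA => e [ei eK eiK].
    case: (pselect (e 0%N = a0)) => e0; last by exists (e 0%N).
    exists (e 1%N) => e1; have := congr1 ei e1; rewrite -e0 !eK //.
  have [v v0] : exists v : 'rV[int]_n, v != 0%R.
    case: (per_or_nonper f x) => [[p hp]|hn].
      by have [v [v0 _]] := eS p (ex_intro _ x (conj xa hp)); exists v.
    have [v hv] : exists v, nonper g v by apply/nC; exists x.
    by exists v; apply/eqP => e; apply: (hv 1%N isT); rewrite e /= g0.
  case: n {gadd gi gK giK pS eS nC g0 h hbij hh hi hK hiK} g v v0 => // g v /negP; case.
  by apply/eqP/rowP => -[i hi].
exists n, (fun x y => hi (h x + h y)%R); split => //; split.
  split; first by move=> x y z; rewrite !hiK addrA.
  split.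
    exists (hi 0%R); split => x; first by split; rewrite hiK ?add0r ?addr0 hK.
    by exists (hi (- h x)%R); split; rewrite hiK ?subrr ?addNr.
  by exists h; split; [exists hi | move=> x y; rewrite hiK].
split => //.
have fhi : forall v, f (hi v) = hi (g v).
  by move=> v; apply: (can_inj hK); rewrite hh !hiK.
by move=> x y; rewrite fhi gadd -!hh.
Qed.


End MP11.
Import MP11.

Local Open Scope classical_set_scope.
Unset Implicit Arguments. Set Strict Implicit. Set Printing Implicit Defensive.

Theorem theorem3p9 (A : Type) (hA : countably_infinite A)
    (f : A -> A) (hf : bijective f) :
  (exists (n : nat) (op : A -> A -> A),
      (0 < n)%N /\ group_iso_Zn op n /\ is_automorphism op f)
  <->
  (exists a0 : A,
     (* (1) a0 is a fixed point, i.e. {a0} is a cycle of length 1 *)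
     f a0 = a0 /\
     (* (2) finitely many distinct cycle lengths *)
     finite_set [set m : nat | exists C, is_cycle f C m] /\
     (* (3) a non-zero cycle of length k forces infinitely many cycles of length k *)
     (forall (k : nat) (C : set A), is_cycle f C k -> C <> [set a0] ->
        infinite_set [set D : set A | is_cycle f D k]) /\
     (* (4) a chain forces infinitely many chains *)
     ((exists C : set A, is_chain f C) ->
        infinite_set [set D : set A | is_chain f D]) /\
     (* (5) lcm closure for lengths of non-zero cycles *)
     (forall (al be : nat) (C1 C2 : set A),
        is_cycle f C1 al -> C1 <> [set a0] ->
        is_cycle f C2 be -> C2 <> [set a0] ->
        exists C : set A, is_cycle f C (lcmn al be))).
Proof.
split.
  move=> [n [op [_ [hg ha]]]]; exact: (forward hf hg ha).
by move=> [a0 ha0]; exact: (backward hA hf ha0).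
Qed.
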